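(* Let $k$ be a positive integer and let $s$ be an even positive integer. Then there exists a hypergraph $\mathcal{F}$ (with $s < |e|$ for every hyperedge $e$ of $\mathcal{F}$) such that $\chi\left({\rm KG}^2(\mathcal{F}, s)\right) = k$ and $${\rm cd}^2(\mathcal{F}, l) = {\rm ecd}^2(\mathcal{F}, l) = k(2l - s + 1)$$ for each $l \in \left\{\frac{s}{2} + 1, \frac{s}{2} + 2, \dots, s\right\}$.
   Context: A hypergraph $\mathcal{F}$ consists of a finite vertex set $V(\mathcal{F})$ and a set $E(\mathcal{F}) \subseteq 2^{V(\mathcal{F})} \setminus \{\varnothing\}$ of hyperedges. For an integer $r \geq 2$ and a nonnegative integer $s$ with $s < |e|$ for every hyperedge $e$ of $\mathcal{F}$, the generalized Kneser hypergraph ${\rm KG}^r(\mathcal{F}, s)$ is the $r$-uniform hypergraph whose vertex set is $E(\mathcal{F})$, in which $r$ distinct hyperedges $e_1, \dots, e_r$ of $\mathcal{F}$ form a hyperedge whenever $|e_i \cap e_j| \leq s$ for all distinct $i, j \in \{1, \dots, r\}$. Its chromatic number $\chi$ is the minimum size of a set $C$ admitting a map $f : E(\mathcal{F}) \to C$ such that no hyperedge of ${\rm KG}^r(\mathcal{F}, s)$ is monochromatic (for $r = 2$ this is the ordinary chromatic number of the graph). For sets $A, B$ and a nonnegative integer $t$, write $A \subseteq_t B$ if $|A \setminus B| \leq t$. For a nonnegative integer $t$ with $t < |e|$ for all hyperedges $e$, the $t$-th $r$-colorability defect ${\rm cd}^r(\mathcal{F}, t)$ is the minimum cardinality of a set $X_0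 \subseteq V(\mathcal{F})$ for which there is a partition $\{X_1, \dots, X_r\}$ of $V(\mathcal{F}) \setminus X_0$ (parts may be empty) such that $e \not\subseteq_t X_i$ for every hyperedge $e \in E(\mathcal{F})$ and every $i \in \{1, \dots, r\}$. The $t$-th equitable $r$-colorability defect ${\rm ecd}^r(\mathcal{F}, t)$ is defined in the same way, with the additional requirement that $\big||X_i| - |X_j|\big| \leq 1$ for all $1 \leq i < j \leq r$. *)

(* Defs.v *)
From mathcomp Require Import all_boot.
Set Implicit Arguments. Unset Strict Implicit. Unset Printing Implicit Defensive.

(* A hypergraph F has vertex set T (a finType) and hyperedge set E : {set {set T}}. *)

Section Kneser.
Variable T : finType.
Implicit Types (E : {set {set T}}) (s t r c : nat).

(* f is a proper coloring of KG^r(F, s) with c colors: no r distinct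
   hyperedges, pairwise intersecting in at most s vertices, get the same color. *)
Definition kneser_proper_coloring r E s c (f : {ffun {set T} -> 'I_c}) : Prop :=
  forall (es : seq {set T}), size es = r -> uniq es -> {subset es <= E} ->
    (forall e1 e2, e1 \in es -> e2 \in es -> e1 != e2 -> #|e1 :&: e2| <= s) ->
    ~ (forall e1 e2, e1 \in es -> e2 \in es -> f e1 = f e2).

Definition kneser_colorable r E s c : Prop :=
  exists f : {ffun {set T} -> 'I_c}, kneser_proper_coloring r E s f.

Definition kneser_chi_eq r E s k : Prop :=
  kneser_colorable r E s k /\ (forall c, kneser_colorable r E s c -> k <= c).

Definition subset_t (A B : {set T}) t : bool := #|A :\: B| <= t.

(* g assigns each vertex to X_0 (None) or to part X_i (Some i), i < r. *)
Definition part r (g : {ffun T -> option 'I_r}) (i : option 'I_r) : {set T} :=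
  [set x | g x == i].

Definition cd_admissible r E t (g : {ffun T -> option 'I_r}) : bool :=
  [forall e in E, forall i : 'I_r, ~~ subset_t e (part g (Some i)) t].

Definition equitable r (g : {ffun T -> option 'I_r}) : bool :=
  [forall i : 'I_r, forall j : 'I_r,
     #|part g (Some i)| <= #|part g (Some j)| + 1].

Definition cd r E t : nat :=
  \big[minn/#|T|]_(g : {ffun T -> option 'I_r} | cd_admissible E t g)
     #|part g None|.

Definition ecd r E t : nat :=
  \big[minn/#|T|]_(g : {ffun T -> option 'I_r} | cd_admissible E t g && equitable g)
     #|part g None|.

End Kneser.

(* Main.v *)
Require Import Defs.
From mathcomp Require Import all_boot zify.

Section Constr.
Variables (k s : nat).
Definition T0 := ('I_k.+1 * 'I_s.+1)%type.
Definition n0 := #|{: T0}|.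
Definition hh (x : 'I_n0) : T0 := enum_val x.
Definition hi (u : T0) : 'I_n0 := enum_rank u.
Lemma hhK : cancel hh hi. Proof. exact: enum_valK. Qed.
Lemma hiK : cancel hi hh. Proof. exact: enum_rankK. Qed.

Lemma card_tr (P : pred T0) : #|[set x | P (hh x)]| = #|[set u | P u]|.
Proof.
rewrite -(card_imset _ (can_inj hhK)); apply: eq_card => u; rewrite inE.
apply/imsetP/idP => [[x]|Pu]; first by rewrite inE => Px ->.
by exists (hi u); rewrite ?inE hiK.
Qed.

Lemma card_prodP (P : pred 'I_k.+1) (Q : pred 'I_s.+1) :
  #|[set x | P (hh x).1 && Q (hh x).2]| = #|[set j | P j]| * #|[set t | Q t]|.
Proof.
rewrite -cardsX; transitivity #|[set u : T0 | P u.1 && Q u.2]|.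
  exact: (card_tr (fun u => P u.1 && Q u.2)).
by apply: eq_card => -[j t]; rewrite !inE.
Qed.

Lemma card_lt a : a <= s.+1 -> #|[set t : 'I_s.+1 | t < a]| = a.
Proof.
move=> am; transitivity #|widen_ord am @: [set: 'I_a]|.
  apply: eq_card => t; rewrite inE.
  apply/idP/imsetP => [lt|[i _ ->]]; last by rewrite /= ltn_ord.
  by exists (Ordinal lt) => //; apply/val_inj.
by rewrite card_imset ?cardsT ?card_ord //; by move=> x y /(congr1 val) /= eq; apply/val_inj.
Qed.

Lemma card_range a b : a <= b <= s.+1 -> #|[set t : 'I_s.+1 | a <= t < b]| = b - a.
Proof.
case/andP=> ab bm.
rewrite (_ : [set t : 'I_s.+1 | a <= t < b] = [set t : 'I_s.+1 | t < b] :\: [set t : 'I_s.+1 | t < a]); last first.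
  by apply/setP => t; rewrite !inE -leqNgt andbC.
rewrite cardsD (setIidPr _) ?card_lt //; first by apply: leq_trans bm.
by apply/subsetP => t; rewrite !inE => /leq_trans; apply.
Qed.

Lemma card_compl (Q : pred 'I_s.+1) : #|[set t | ~~ Q t]| = s.+1 - #|[set t | Q t]|.
Proof.
have := cardsC [set t | Q t]; rewrite card_ord.
have -> : #|~: [set t | Q t]| = #|[set t | ~~ Q t]| by apply: eq_card => t; rewrite !inE.
move: #|[set t | ~~ Q t]| #|[set t | Q t]| => a b; lia.
Qed.

Definition blk (j : 'I_k.+1) : {set 'I_n0} := [set x | (hh x).1 == j].
Definition EE : {set {set 'I_n0}} := [set blk j | j : 'I_k.+1].

Lemma card_blk j : #|blk j| = s.+1.
Proof.
transitivity #|[set x | ((hh x).1 == j) && true]|.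
  by apply: eq_card => x; rewrite !inE andbT.
rewrite (card_prodP (pred1 j) predT).
rewrite (_ : [set j' | pred1 j j'] = [set j]) ?cards1; last by apply/setP=>y; rewrite !inE.
rewrite mul1n; transitivity #|'I_s.+1|; last exact: card_ord. by apply: eq_card => t; rewrite inE.
Qed.

Lemma blk_in j t : hi (j, t) \in blk j.
Proof. by rewrite inE hiK. Qed.

Lemma blk_inj : injective blk.
Proof. by move=> i j eq; have := blk_in i ord0; rewrite eq inE hiK => /eqP. Qed.

Lemma blkI i j : i != j -> blk i :&: blk j = set0.
Proof.
move=> ij; apply/setP => x; rewrite !inE; apply/negP => /andP[/eqP e1 /eqP e2].
by move: ij; rewrite -e1 -e2 eqxx.
Qed.

Definition col : {ffun {set 'I_n0} -> 'I_k.+1} :=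
  [ffun e : {set 'I_n0} => if [pick x in e] is Some x then (hh x).1 else ord0].

Lemma col_blk j : col (blk j) = j.
Proof.
rewrite ffunE; case: pickP => [x|H]; first by rewrite inE => /eqP.
by have := H (hi (j, ord0)); rewrite inE hiK eqxx.
Qed.


Lemma EE_size e : e \in EE -> s < #|e|.
Proof. by case/imsetP => j _ ->; rewrite card_blk. Qed.

Lemma blk_EE j : blk j \in EE.
Proof. by apply: imset_f. Qed.

Lemma chi_EE : kneser_chi_eq 2 EE s k.+1.
Proof.
split.
  exists col => es Hs Hu Hsub Hint Hall.
  case: es Hs Hu Hsub Hint Hall => [|e1 [|e2 [|]]] //= _ Hu Hsub _ Hall.
  have /imsetP[i _ E1] := Hsub e1 (mem_head _ _).
  have /imsetP[j _ E2] : e2 \in EE by apply: Hsub; rewrite !inE eqxx orbT.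
  have := Hall e1 e2 (mem_head _ _); rewrite !inE eqxx orbT E1 E2 !col_blk => ij.
  by move: Hu; rewrite E1 E2 (ij isT) !inE eqxx.
move=> c [f Hf].
have inj : injective (fun i : 'I_k.+1 => f (blk i)).
  move=> i j /= eq; case: (eqVneq i j) => // ij; exfalso.
  apply: (Hf [:: blk i; blk j]) => //.
  - by rewrite /= inE (inj_eq blk_inj) ij.
  - by move=> e; rewrite !inE => /orP[]/eqP->; apply: blk_EE.
  - move=> e1 e2; rewrite !inE => /orP[]/eqP-> /orP[]/eqP->; rewrite ?eqxx // => _.
      by rewrite blkI // cards0.
    by rewrite blkI 1?eq_sym // cards0.
  - by move=> e1 e2; rewrite !inE => /orP[]/eqP-> /orP[]/eqP->.
by have := leq_card _ inj; rewrite !card_ord.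
Qed.


Lemma I2_cases (i : 'I_2) : i = ord0 \/ i = ord_max.
Proof. case: i => [[|[|i]] Hi]; [left|right|by []]; exact: val_inj. Qed.

Lemma ord_max0 : (ord_max == ord0 :> 'I_2) = false.
Proof. by []. Qed.

Lemma blk_lower l (g : {ffun 'I_n0 -> option 'I_2}) j :
  cd_admissible EE l g -> 2 * l.+1 <= s.+1 + #|blk j :&: part g None|.
Proof.
move/forallP/(_ (blk j)); rewrite blk_EE /= => /forallP H.
have := H ord0; have := H ord_max; rewrite /subset_t -!ltnNge => H1 H0.
set A := blk j :\: _ in H0; set B := blk j :\: _ in H1.
have U : #|A :|: B| <= #|blk j| by apply: subset_leq_card; rewrite subUset !subsetDl.
have I : #|A :&: B| <= #|blk j :&: part g None|.
  apply: subset_leq_card; apply/subsetP => x; rewrite !inE.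
  case/andP=> /andP[a1 ->] /andP[a2 _] /=.
  by case: (g x) a1 a2 => // i; case: (I2_cases i) => ->; rewrite eqxx.
have := cardsUI A B; rewrite card_blk in U; move: H0 H1 I U; move: #|A| #|B| #|A :|: B| #|A :&: B| #|blk j :&: part g None| => a b c d e; lia.
Qed.

Lemma sum_blocks (g : {ffun 'I_n0 -> option 'I_2}) :
  #|part g None| = \sum_(j < k.+1) #|blk j :&: part g None|.
Proof.
rewrite -sum1_card (partition_big (fun x => (hh x).1) predT) //=.
apply: eq_bigr => j _; rewrite -sum1_card; apply: eq_bigl => x.
by rewrite !inE andbC.
Qed.

Lemma cd_lower l (g : {ffun 'I_n0 -> option 'I_2}) :
  cd_admissible EE l g -> k.+1 * (2 * l.+1 - s.+1) <= #|part g None|.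
Proof.
move=> adm; rewrite sum_blocks.
apply: leq_trans (_ : \sum_(j < k.+1) (2 * l.+1 - s.+1) <= _).
  by rewrite sum_nat_const card_ord.
apply: leq_sum => j _; have := @blk_lower l g j adm; lia.
Qed.


Definition g0 (d : nat) : {ffun 'I_n0 -> option 'I_2} :=
  [ffun x => if (hh x).2 < d then Some ord0
             else if (hh x).2 < 2 * d then Some ord_max else None].

Lemma g0_0 d x : (g0 d x == Some ord0) = ((hh x).2 < d).
Proof. by rewrite ffunE; case: ifP => //; case: ifP. Qed.

Lemma g0_1 d x : (g0 d x == Some ord_max) = (d <= (hh x).2 < 2 * d).
Proof. by rewrite ffunE; case: ltnP => //=; case: ifP. Qed.

Lemma g0_N d x : (g0 d x == None) = (2 * d <= (hh x).2 < s.+1).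
Proof.
rewrite ffunE ltn_ord andbT; case: ltnP => /= h; case: ltnP => //= h2.
lia.
Qed.

Lemma cardT_k : #|[set j : 'I_k.+1 | predT j]| = k.+1.
Proof. by transitivity #|'I_k.+1|; [apply: eq_card => j; rewrite inE | exact: card_ord]. Qed.

Lemma cardj (j : 'I_k.+1) : #|[set j' : 'I_k.+1 | pred1 j j']| = 1.
Proof. by rewrite -(cards1 j); apply: eq_card => y; rewrite !inE. Qed.

Section W.
Variable d : nat.
Hypothesis hd : 2 * d <= s.+1.

Lemma c0 : #|part (g0 d) (Some ord0)| = k.+1 * d.
Proof.
transitivity #|[set x | predT (hh x).1 && ((hh x).2 < d)]|.
  by apply: eq_card => x; rewrite !inE g0_0.
by rewrite (card_prodP predT (fun t => t < d)) cardT_k card_lt //; lia.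
Qed.

Lemma c1 : #|part (g0 d) (Some ord_max)| = k.+1 * d.
Proof.
transitivity #|[set x | predT (hh x).1 && (d <= (hh x).2 < 2 * d)]|.
  by apply: eq_card => x; rewrite !inE g0_1.
rewrite (card_prodP predT (fun t => d <= t < 2 * d)) cardT_k card_range; [congr (_ * _); lia | apply/andP; split; lia].
Qed.

Lemma cN : #|part (g0 d) None| = k.+1 * (s.+1 - 2 * d).
Proof.
transitivity #|[set x | predT (hh x).1 && (2 * d <= (hh x).2 < s.+1)]|.
  by apply: eq_card => x; rewrite !inE g0_N.
by rewrite (card_prodP predT (fun t => 2 * d <= t < s.+1)) cardT_k card_range //; apply/andP; split.
Qed.

Lemma adm0 l : s.+1 - d > l -> cd_admissible EE l (g0 d).
Proof.
move=> hl; apply/forallP => e; apply/implyP => /imsetP[j _ ->].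
apply/forallP => i; rewrite /subset_t -ltnNge.
case: (I2_cases i) => ->.
  have -> : #|blk j :\: part (g0 d) (Some ord0)| =
            #|[set x | pred1 j (hh x).1 && ~~ ((hh x).2 < d)]|.
    by apply: eq_card => x; rewrite !inE g0_0 andbC.
  by rewrite (card_prodP (pred1 j) (fun t => ~~ (t < d))) cardj card_compl card_lt ?mul1n //; lia.
have -> : #|blk j :\: part (g0 d) (Some ord_max)| =
          #|[set x | pred1 j (hh x).1 && ~~ (d <= (hh x).2 < 2 * d)]|.
  by apply: eq_card => x; rewrite !inE g0_1 andbC.
rewrite (card_prodP (pred1 j) (fun t => ~~ (d <= t < 2 * d))) cardj card_compl card_range ?mul1n; first lia.
apply/andP; split; lia.
Qed.

Lemma eq0 : equitable (g0 d).
Proof.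
apply/forallP => i; apply/forallP => j.
by case: (I2_cases i) => ->; case: (I2_cases j) => ->; rewrite ?c0 ?c1 leq_addr.
Qed.
End W.

End Constr.

Lemma bigmin_le (I : eqType) (r : seq I) (P : pred I) (F : I -> nat) x0 i0 :
  i0 \in r -> P i0 -> \big[minn/x0]_(i <- r | P i) F i <= F i0.
Proof.
elim: r => // a r IH; rewrite inE big_cons => /orP[/eqP <-|ir] Pi.
  by rewrite Pi geq_minl.
case: ifP => _; last exact: IH.
by rewrite geq_min IH ?orbT.
Qed.
Lemma bigmin_eq (I : finType) (P : pred I) (F : I -> nat) x0 v i0 :
  P i0 -> F i0 = v -> v <= x0 -> (forall i, P i -> v <= F i) ->
  \big[minn/x0]_(i | P i) F i = v.
Proof.
move=> Pi0 Fi0 vx0 low; apply/eqP; rewrite eqn_leq; apply/andP; split.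
  by rewrite -Fi0 bigmin_le // mem_index_enum.
elim/big_ind: _ => //; first by move=> a b; rewrite leq_min => -> ->.
Qed.

Theorem theorem3 (k s : nat) :
  0 < k -> 0 < s -> ~~ odd s ->
  exists (n : nat) (E : {set {set 'I_n}}),
    (forall e, e \in E -> s < #|e|) /\
    kneser_chi_eq 2 E s k /\
    (forall l : nat, s./2 < l <= s ->
       cd 2 E l = k * (2 * l - s + 1) /\ ecd 2 E l = k * (2 * l - s + 1)).
Proof.
case: k => [|k] // _ _ _; exists (n0 k s), (EE k s).
split; first exact: EE_size.
split; first exact: chi_EE.
move=> l /andP[hl ls].
have h2 : s < 2 * l by rewrite mul2n -ltn_half_double.
pose d := s - l.
have hd : 2 * d <= s.+1 by rewrite /d; lia.
have adm : cd_admissible (EE k s) l (g0 k s d) by apply: adm0; rewrite /d; lia.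
have low : forall g : {ffun 'I_(n0 k s) -> option 'I_2}, cd_admissible (EE k s) l g -> k.+1 * (2 * l - s + 1) <= #|part g None|.
  move=> g a; have := @cd_lower k s l g a; have -> : 2 * l.+1 - s.+1 = 2 * l - s + 1 by lia. by [].
have val : #|part (g0 k s d) None| = k.+1 * (2 * l - s + 1).
  by rewrite cN //; congr (_ * _); rewrite /d; lia.
have vx : k.+1 * (2 * l - s + 1) <= #|'I_(n0 k s)| by rewrite -val max_card.
split; apply: (@bigmin_eq _ _ _ _ _ (g0 k s d)) => //.
- by rewrite adm eq0.
- by move=> g /andP[a _]; apply: low.
Qed.
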